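(* Let $G$ and $H$ be two vertex-disjoint graphs, considered as starting positions of the Maker-Breaker domination game, and let $G\bowtie H$ denote their join (the union of $G$ and $H$ together with all edges $uv$ with $u\in V(G)$, $v\in V(H)$). (i) If $G=K_1$ and $o(H)=\mathcal S$ (or $H=K_1$ and $o(G)=\mathcal S$), then $o(G\bowtie H)=\mathcal N$. (ii) Otherwise, $o(G\bowtie H)=\mathcal D$.
   Context: The Maker-Breaker domination game on a graph: Dominator and Staller alternately choose a not-yet-chosen vertex (no passing), starting with all vertices unchosen; when all vertices are chosen, Dominator wins if his vertices form a dominating set of the graph, otherwise Staller wins. The outcome $o(\cdot)$ is $\mathcal D$ if Dominator has a winning strategy both as first and as second player, $\mathcal S$ if Staller has a winning strategy both as first and as second player, and $\mathcal N$ if the first player has a winning strategy; every graph has one of these three outcomes. $K_1$ is the graph with a single vertex. *)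

(* Defs.v *)
From mathcomp Require Import all_boot.
Set Implicit Arguments. Unset Strict Implicit. Unset Printing Implicit Defensive.

(* A simple graph on a finite vertex type T is a symmetric irreflexive rel T. *)

Definition dominating (T : finType) (e : rel T) (D : {set T}) : bool :=
  [forall v : T, (v \in D) || [exists u in D, e u v]].

(* Returns true iff Dominator has a winning strategy.
   [n] is fuel (number of remaining moves); the game ends when no vertex is
   free, Dominator then winning iff D is dominating. *)
Fixpoint dom_game (T : finType) (e : rel T) (n : nat) (D S : {set T})
    (dturn : bool) : bool :=
  match n with
  | 0 => dominating e D
  | n'.+1 =>
    let F := ~: (D :|: S) in
    if F == set0 then dominating e D else
    if dturn then [exists v in F, dom_game e n' (v |: D) S false]
    else [forall v in F, dom_game e n' D (v |: S) true]
  end.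

Definition dom_wins_first (T : finType) (e : rel T) : bool :=
  dom_game e #|T| set0 set0 true.
Definition dom_wins_second (T : finType) (e : rel T) : bool :=
  dom_game e #|T| set0 set0 false.

Inductive outcome := OutD | OutS | OutN.

(* o(G) = D : Dominator wins as first and as second player;
   o(G) = S : Staller wins as first and as second player;
   o(G) = N : the first player wins (whoever it is). *)
Definition outcome_is (T : finType) (e : rel T) (o : outcome) : Prop :=
  match o with
  | OutD => dom_wins_first e /\ dom_wins_second e
  | OutS => ~~ dom_wins_first e /\ ~~ dom_wins_second e
  | OutN => dom_wins_first e /\ ~~ dom_wins_second e
  end.

Definition join_rel (T1 T2 : finType) (e1 : rel T1) (e2 : rel T2) : rel (T1 + T2)%type :=
  fun x y => match x, y with
  | inl a, inl b => e1 a b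
  | inr a, inr b => e2 a b
  | _, _ => true
  end.

(* Main.v *)
Require Import Defs.
From mathcomp Require Import all_boot zify.
Set Implicit Arguments. Unset Strict Implicit.

Section Gen.
Variables (T : finType) (e : rel T).

Lemma dominating_sub (D D' : {set T}) : D \subset D' -> dominating e D -> dominating e D'.
Proof.
move=> sub /forallP H; apply/forallP => v.
case/orP: (H v) => [vD| /existsP [u /andP[uD euv]]].
  by rewrite (subsetP sub _ vD).
by apply/orP; right; apply/existsP; exists u; rewrite (subsetP sub _ uD).
Qed.

Lemma dom_win n D S t : dominating e D -> dom_game e n D S t.
Proof.
elim: n D S t => [|n IH] D S t hD //=.
case: ifP => // /negbT /set0Pn [v hv]; case: t.
  apply/existsP; exists v; rewrite hv /=; apply: IH.
  by apply: dominating_sub hD; apply: subsetUr.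
by apply/forall_inP => w _; apply: IH.
Qed.

Lemma game_end n D S t : ~: (D :|: S) = set0 -> dom_game e n D S t = dominating e D.
Proof. by case: n => //= n ->; rewrite eqxx. Qed.

Lemma dturn_eq k D S : dom_game e k.+1 D S true =
  if ~: (D :|: S) == set0 then dominating e D
  else [exists v in ~: (D :|: S), dom_game e k (v |: D) S false].
Proof. by []. Qed.

Lemma sturn_eq k D S : dom_game e k.+1 D S false =
  if ~: (D :|: S) == set0 then dominating e D
  else [forall v in ~: (D :|: S), dom_game e k D (v |: S) true].
Proof. by []. Qed.

Lemma dturn_pick k D S v : v \in ~: (D :|: S) -> dom_game e k (v |: D) S false ->
  dom_game e k.+1 D S true.
Proof.
move=> hv H; rewrite dturn_eq ifN; last by apply/set0Pn; exists v.
by apply/existsP; exists v; rewrite hv.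
Qed.

Lemma sturn_all k D S : ~: (D :|: S) != set0 -> (forall w, w \in ~: (D :|: S) -> dom_game e k D (w |: S) true) ->
  dom_game e k.+1 D S false.
Proof.
by move=> F0 H; rewrite sturn_eq ifN //; apply/forall_inP.
Qed.

Lemma dturn_win n D S v : v \in ~: (D :|: S) -> dominating e (v |: D) -> dom_game e n.+1 D S true.
Proof. by move=> hv hd; apply: (dturn_pick hv); apply: dom_win. Qed.

Lemma freeD (D S : {set T}) v : ~: ((v |: D) :|: S) = (~: (D :|: S)) :\ v.
Proof. by apply/setP => x; rewrite !inE; case: (x == v); case: (x \in D); case: (x \in S). Qed.

Lemma freeS (D S : {set T}) v : ~: (D :|: (v |: S)) = (~: (D :|: S)) :\ v.
Proof. by apply/setP => x; rewrite !inE; case: (x == v); case: (x \in D); case: (x \in S). Qed.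

Lemma cardD1' (A : {set T}) v : v \in A -> #|A :\ v| = #|A|.-1.
Proof. by move=> hv; rewrite (cardsD1 v A) hv. Qed.

Lemma sturn_win n D S a b : a != b -> a \in ~: (D :|: S) -> b \in ~: (D :|: S) ->
  dominating e (a |: D) -> dominating e (b |: D) -> dom_game e n.+2 D S false.
Proof.
move=> ab ha hb da db; apply: sturn_all => [|w hw]; first by apply/set0Pn; exists a.
case: (eqVneq w a) => [->|wa].
  by apply: (dturn_win _ _ db); rewrite freeS in_setD1 eq_sym ab.
by apply: (dturn_win _ _ da); rewrite freeS in_setD1 eq_sym wa.
Qed.


Lemma free_ne0 (A : {set T}) k : #|A| = k.+1 -> A != set0.
Proof. by move=> h; apply/negP => /eqP A0; rewrite A0 cards0 in h. Qed.

Lemma mono n : forall D S v, #|~: (D :|: S)| = n.+1 -> v \in ~: (D :|: S) ->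
  dom_game e n.+1 D S false -> dom_game e n (v |: D) S false.
Proof.
elim/ltn_ind: n => n IH D S v hc hv H.
have hc' : #|~: ((v |: D) :|: S)| = n by rewrite freeD cardD1' // hc.
rewrite sturn_eq ifN in H; last exact: free_ne0 hc.
have {}H := forall_inP H.
case: n IH hc hc' H => [|m] IH hc hc' H.
  rewrite game_end; last exact: cards0_eq.
  have := H v hv; rewrite game_end; last first.
    by apply: cards0_eq; rewrite freeS cardD1' // hc.
  by apply: dominating_sub; apply: subsetUr.
rewrite sturn_eq ifN; last exact: free_ne0 hc'.
apply/forall_inP => w; rewrite freeD in_setD1 => /andP [wv hw].
have := H w hw.
have hcw : #|~: (D :|: (w |: S))| = m.+1 by rewrite freeS cardD1' // hc.
rewrite dturn_eq ifN; last exact: free_ne0 hcw.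
case/existsP => x /andP [hx Hx].
have hcx : #|~: ((x |: D) :|: (w |: S))| = m by rewrite freeD cardD1' // hcw.
have hcv : #|~: ((v |: D) :|: (w |: S))| = m by rewrite freeD cardD1' ?hcw // freeS in_setD1 eq_sym wv.
case: (eqVneq x v) => [exv|xv].
  subst x.
  case: m IH hc hc' hcw Hx hx hcx hcv H => [|k] IH hc hc' hcw Hx hx hcx hcv H.
    by rewrite game_end -?(game_end 0 _ _ false) //; apply: cards0_eq.
  have /set0Pn [y hy] := free_ne0 hcv.
  apply: (dturn_pick hy); apply: IH => //.
case: m IH hc hc' hcw Hx hx hcx hcv H => [|k] IH hc hc' hcw Hx hx hcx hcv H.
  have : x \in ~: ((v |: D) :|: (w |: S)) by rewrite freeD in_setD1 xv.
  by rewrite (cards0_eq hcv) inE.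
have hx' : x \in ~: ((v |: D) :|: (w |: S)) by rewrite freeD in_setD1 xv.
apply: (dturn_pick hx').
rewrite setUCA; apply: IH => //.
by rewrite freeD freeS !in_setD1 eq_sym xv eq_sym wv hv.
Qed.

Lemma sec_first : 0 < #|T| -> dom_game e #|T| set0 set0 false -> dom_game e #|T| set0 set0 true.
Proof.
case hT: #|T| => [//|n] _ H.
have hc : #|~: ((set0 : {set T}) :|: set0)| = n.+1 by rewrite setU0 setC0 cardsT.
have /set0Pn [v hv] := free_ne0 hc.
by apply: (dturn_pick hv); apply: mono.
Qed.

End Gen.

Lemma sim (T T' : finType) (e : rel T) (e' : rel T') (f : T' -> T) (D0 S0 : {set T}) :
  injective f -> ~: (D0 :|: S0) = f @: setT ->
  (forall D' : {set T'}, dominating e (D0 :|: f @: D') = dominating e' D') ->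
  forall n (D' S' : {set T'}) t, dom_game e n (D0 :|: f @: D') (S0 :|: f @: S') t = dom_game e' n D' S' t.
Proof.
move=> finj hcov hdom; elim=> [|n IH] D' S' t /=; first exact: hdom.
have hF : ~: ((D0 :|: f @: D') :|: (S0 :|: f @: S')) = f @: (~: (D' :|: S')).
  apply/setP => x; case: (boolP (x \in f @: setT)) => [/imsetP [y _ ->]|nx].
    have hy : f y \in ~: (D0 :|: S0) by rewrite hcov; apply: imset_f; apply: in_setT.
    move: hy; rewrite !inE negb_or => /andP [n1 n2].
    by rewrite (negbTE n1) (negbTE n2) /= !mem_imset // !inE.
  have : x \in D0 :|: S0 by move: nx; rewrite -hcov !inE negbK.
  rewrite !inE => h.
  have -> : (x \in f @: (~: (D' :|: S'))) = false.
    by apply/negbTE; apply: contra nx => /imsetP [z _ ->]; apply: imset_f; apply: in_setT.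
  by case/orP: h => ->; rewrite ?orbT.
rewrite hF imset_eq0; case: ifP => // _; case: t.
  apply/existsP/existsP => [[x /andP [/imsetP [y yF ->] H]] | [y /andP [yF H]]].
    by exists y; rewrite yF /= -IH imsetU1 setUCA.
  by exists (f y); rewrite imset_f //= setUCA -imsetU1 IH.
apply/forall_inP/forall_inP => H.
  by move=> y yF; rewrite -IH imsetU1 setUCA; apply: H; apply: imset_f.
by move=> x /imsetP [y yF ->]; rewrite setUCA -imsetU1 IH; apply: H.
Qed.

Lemma dom_bij (T T' : finType) (e : rel T) (e' : rel T') (f : T' -> T) (g : T -> T') :
  cancel f g -> cancel g f -> (forall x y, e (f x) (f y) = e' x y) ->
  forall D' : {set T'}, dominating e (f @: D') = dominating e' D'.
Proof.
move=> fK gK he D'; have finj := can_inj fK.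
apply/forallP/forallP => H v.
  case/orP: (H (f v)) => [|/existsP [u /andP [/imsetP [u' u'D ->] euv]]].
    by rewrite mem_imset // => ->.
  by apply/orP; right; apply/existsP; exists u'; rewrite u'D -he.
rewrite -[v]gK.
case/orP: (H (g v)) => [gD | /existsP [u /andP [uD euv]]]; apply/orP.
  by left; apply: imset_f.
by right; apply/existsP; exists (f u); rewrite imset_f //= he.
Qed.

Definition swp (A B : Type) (x : A + B) : B + A :=
  match x with inl a => inr a | inr b => inl b end.

Lemma swpK (A B : Type) : cancel (@swp A B) (@swp B A).
Proof. by case. Qed.

Lemma swapG (T1 T2 : finType) (e1 : rel T1) (e2 : rel T2) n t :
  dom_game (join_rel e1 e2) n set0 set0 t = dom_game (join_rel e2 e1) n set0 set0 t.
Proof.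
have hcov : ~: (set0 :|: set0) = (@swp T2 T1) @: setT.
  by apply/setP => x; rewrite !inE; apply/esym/imsetP; exists (@swp T1 T2 x); rewrite ?swpK.
have hdom : forall D' : {set T2 + T1}, dominating (join_rel e1 e2) (set0 :|: (@swp T2 T1) @: D') = dominating (join_rel e2 e1) D'.
  by move=> D'; rewrite set0U; apply: (dom_bij (@swpK _ _) (@swpK _ _)); case=> a; case.
have := @sim _ _ (join_rel e1 e2) (join_rel e2 e1) (@swp T2 T1) set0 set0 (can_inj (@swpK _ _)) hcov hdom n set0 set0 t.
by rewrite imset0 !setU0.
Qed.

Lemma swap_first (T1 T2 : finType) (e1 : rel T1) (e2 : rel T2) :
  dom_wins_first (join_rel e1 e2) = dom_wins_first (join_rel e2 e1).
Proof. by rewrite /dom_wins_first swapG !card_sum addnC. Qed.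

Lemma swap_second (T1 T2 : finType) (e1 : rel T1) (e2 : rel T2) :
  dom_wins_second (join_rel e1 e2) = dom_wins_second (join_rel e2 e1).
Proof. by rewrite /dom_wins_second swapG !card_sum addnC. Qed.

Section Join.
Variables (T1 T2 : finType) (e1 : rel T1) (e2 : rel T2).
Local Notation J := (join_rel e1 e2).

Lemma dom_both (D : {set T1 + T2}) a b : inl a \in D -> inr b \in D -> dominating J D.
Proof.
move=> ha hb; apply/forallP => -[x|x]; apply/orP; right; apply/existsP.
  by exists (inr b); rewrite hb.
by exists (inl a); rewrite ha.
Qed.

Lemma dom_K1 (D : {set T1 + T2}) g : #|T1| = 1 -> inl g \in D -> dominating J D.
Proof.
move=> h1 hg; apply/forallP => -[x|x]; apply/orP.
  left; suff -> : x = g by [].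
  have /fintype_le1P H : #|T1| <= 1 by rewrite h1.
  exact: (H g x).
by right; apply/existsP; exists (inl g); rewrite hg.
Qed.

Lemma big_case : 1 < #|T1| -> 1 < #|T2| -> dom_wins_first J && dom_wins_second J.
Proof.
move=> h1 h2.
have /card_gt1P [a1 [a2 [_ _ a12]]] := h1.
have /card_gt1P [b1 [b2 [_ _ b12]]] := h2.
have [n hN] : exists n, #|{: T1 + T2}| = n.+4.
  by exists (#|T1| + #|T2| - 4); rewrite card_sum; lia.
have F0 : ~: ((set0 : {set T1 + T2}) :|: set0) != set0.
  by apply/set0Pn; exists (inl a1); rewrite !inE.
apply/andP; split; rewrite /dom_wins_first /dom_wins_second hN.
  have ha : inl a1 \in ~: ((set0 : {set T1 + T2}) :|: set0) by rewrite !inE.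
  apply: (dturn_pick ha).
  apply: (@sturn_win _ _ _ _ _ (inr b1) (inr b2)) => //; rewrite ?inE //.
    by apply: (@dom_both _ a1 b1); rewrite !inE eqxx ?orbT.
  by apply: (@dom_both _ a1 b2); rewrite !inE eqxx ?orbT.
apply: sturn_all => // -[x|y] _.
  have [a ha] : exists a, a != x by case: (eqVneq a1 x) => [<-|]; [exists a2; rewrite eq_sym | exists a1].
  have hf : inl a \in ~: ((set0 : {set T1 + T2}) :|: (inl x |: set0)).
    by rewrite !inE orbF; apply: contra ha => /eqP [->].
  apply: (dturn_pick hf).
  apply: (@sturn_win _ _ _ _ _ (inr b1) (inr b2)) => //; rewrite ?inE //.
    by apply: (@dom_both _ a b1); rewrite !inE eqxx ?orbT.
  by apply: (@dom_both _ a b2); rewrite !inE eqxx ?orbT.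
have [b hb] : exists b, b != y by case: (eqVneq b1 y) => [<-|]; [exists b2; rewrite eq_sym | exists b1].
have hf : inr b \in ~: ((set0 : {set T1 + T2}) :|: (inr y |: set0)).
  by rewrite !inE orbF; apply: contra hb => /eqP [->].
apply: (dturn_pick hf).
apply: (@sturn_win _ _ _ _ _ (inl a1) (inl a2)) => //; rewrite ?inE //.
  by apply: (@dom_both _ a1 b); rewrite !inE eqxx ?orbT.
by apply: (@dom_both _ a2 b); rewrite !inE eqxx ?orbT.
Qed.

End Join.

Lemma K1_case (T1 T2 : finType) (e1 : rel T1) (e2 : rel T2) :
  #|T1| = 1 -> 0 < #|T2| ->
  dom_wins_first (join_rel e1 e2) /\ dom_wins_second (join_rel e1 e2) = dom_wins_first e2.
Proof.
move=> h1 h2.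
have /card_gt0P [g _] : 0 < #|T1| by rewrite h1.
have all1 : forall a : T1, a = g.
  have /fintype_le1P H : #|T1| <= 1 by rewrite h1.
  by move=> a; exact: (H g a).
have [m hm] : exists m, #|T2| = m.+1 by exists #|T2|.-1; rewrite prednK.
have hN : #|{: T1 + T2}| = m.+2 by rewrite card_sum h1 hm.
have hfree : inl g \in ~: ((set0 : {set T1 + T2}) :|: set0) by rewrite !inE.
split.
  rewrite /dom_wins_first hN; apply: (dturn_win _ hfree).
  by apply: (@dom_K1 _ _ e1 e2 _ g h1); rewrite !inE eqxx.
have hcov : ~: ((set0 : {set T1 + T2}) :|: [set inl g]) = (@inr T1 T2) @: setT.
  apply/setP => -[a|b]; rewrite !inE.
    rewrite (all1 a) eqxx /=; apply/esym/negbTE/imsetP => -[y _] //.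
  by apply/esym/imsetP; exists b.
have hdom : forall D' : {set T2}, dominating (join_rel e1 e2) (set0 :|: (@inr T1 T2) @: D') = dominating e2 D'.
  move=> D'; rewrite set0U; apply/forallP/forallP => H v.
    case/orP: (H (inr v)) => [|/existsP [[u|u] /andP [uD euv]]].
    - by rewrite mem_imset //; [move=> ->|move=> ? ? []].
    - by move: uD => /imsetP [].
    - by move: uD; rewrite mem_imset //; [move=> uD; apply/orP; right; apply/existsP; exists u; rewrite uD | move=> ? ? []].
  have [u uD] : exists u, u \in D'.
    have /card_gt0P [b _] := h2.
    case/orP: (H b) => [bD|/existsP [u /andP [uD _]]]; by [exists b | exists u].
  case: v => [a|b].
    by apply/orP; right; apply/existsP; exists (inr u); rewrite imset_f.
  case/orP: (H b) => [bD|/existsP [w /andP [wD ewb]]]; apply/orP.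
    by left; apply: imset_f.
  by right; apply/existsP; exists (inr w); rewrite imset_f.
have Hs := @sim _ _ (join_rel e1 e2) e2 (@inr T1 T2) set0 [set inl g] (@inr_inj _ _) hcov hdom m.+1 set0 set0 true.
rewrite imset0 !setU0 in Hs.
rewrite /dom_wins_second /dom_wins_first hN hm sturn_eq ifN; last by apply/set0Pn; exists (inl g).
apply/forall_inP/idP => [H | H [a|b] _].
  by rewrite -Hs -(setU0 [set inl g]); apply: H; rewrite !inE.
  by rewrite (all1 a) setU0 Hs.
have hf : inl g \in ~: ((set0 : {set T1 + T2}) :|: (inr b |: set0)) by rewrite !inE.
apply: (dturn_win _ hf).
by apply: (@dom_K1 _ _ e1 e2 _ g h1); rewrite !inE eqxx.
Qed.

Lemma first_of (T : finType) (e : rel T) : 0 < #|T| -> ~ outcome_is e OutS -> dom_wins_first e.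
Proof.
move=> hT hS; case hf: (dom_wins_first e) => //; exfalso; apply: hS; split; first by rewrite hf.
by apply/negP => hs; move: (sec_first hT hs); rewrite -/(dom_wins_first e) hf.
Qed.

Theorem theorem5 (T1 T2 : finType) (e1 : rel T1) (e2 : rel T2)
  (sym1 : symmetric e1) (irr1 : irreflexive e1)
  (sym2 : symmetric e2) (irr2 : irreflexive e2)
  (ne1 : 0 < #|T1|) (ne2 : 0 < #|T2|) :
  (((#|T1| = 1 /\ outcome_is e2 OutS) \/ (#|T2| = 1 /\ outcome_is e1 OutS)) ->
     outcome_is (join_rel e1 e2) OutN) /\
  (~ ((#|T1| = 1 /\ outcome_is e2 OutS) \/ (#|T2| = 1 /\ outcome_is e1 OutS)) ->
     outcome_is (join_rel e1 e2) OutD).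
Proof.
split.
  case=> [[h1 [nf ns]] | [h2 [nf ns]]] /=.
    by have [f s] := K1_case e1 e2 h1 ne2; rewrite s.
  by have [f s] := K1_case e2 e1 h2 ne1; rewrite swap_first swap_second s.
move=> hn /=.
case: (eqVneq #|T1| 1) => h1.
  have [f s] := K1_case e1 e2 h1 ne2; split => //; rewrite s.
  by apply: first_of => // hS; apply: hn; left.
case: (eqVneq #|T2| 1) => h2.
  have [f s] := K1_case e2 e1 h2 ne1; rewrite swap_first swap_second; split => //; rewrite s.
  by apply: first_of => // hS; apply: hn; right.
have g1 : 1 < #|T1| by move: ne1 h1; case: #|T1| => [|[|k]].
have g2 : 1 < #|T2| by move: ne2 h2; case: #|T2| => [|[|k]].
by have /andP [] := big_case e1 e2 g1 g2.
Qed.
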